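(* Let $O_1,\ldots,O_n$ be trajectories of the longitudinal data, $P_n$ their empirical measure, and, for each trajectory, let $\hat Q_{t,\varepsilon}$, $\hat V_{t,\varepsilon}$, $I_t(\hat\pi)$ and the partial loss $\mathcal{L}^\star(\hat{Q}_\varepsilon,\hat{V}_{\varepsilon'};\hat\pi)=\sum_{t=1}^T I_t(\hat\pi)\mathcal{L}_{\mathrm{bce}}(\hat{Q}_{t,\varepsilon},\hat{V}_{t+1,\varepsilon'})$ be as defined in the context. Suppose $\varepsilon^\star$ satisfies $$\frac{\partial}{\partial\varepsilon}\Big|_{\varepsilon=\varepsilon^\star}P_n\mathcal{L}^\star(\hat{Q}_\varepsilon,\hat{V}_{\varepsilon^\star};\hat\pi)=0.$$ Then $\hat Q_{\varepsilon^\star}$ solves the efficient influence function equation: $P_nD^\star(\hat{Q}_{\varepsilon^\star},\hat\pi)=0$, where $D^\star(\hat Q_{\varepsilon^\star},\hat\pi)=(\hat V_{1,\varepsilon^\star}-\hat\psi^\star_n)+\sum_{t=1}^T I_t(\hat\pi)(\hat V_{t+1,\varepsilon^\star}-\hat Q_{t,\varepsilon^\star})$ with the plug-in value $\hat\psi^\star_n=P_n\hat V_{1,\varepsilon^\star}$.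
   Context: Longitudinal data $O=(W,L_1,A_1,Y_1,\ldots,L_\tau,A_\tau,Y_\tau)$ with stopping time $T\le\tau$, final outcome $Y_T\in[0,1]$, $pa(A_t)=(W,L_{1:t},A_{1:t-1},Y_{1:t-1})$, $pa(Y_t)=(pa(A_t),A_t)$. $g=(g_t)$ is a user-specified treatment policy and $\hat\pi=(\hat\pi_t)$ estimated treatment mechanisms with $g_t\ll\hat\pi_t$; $I_t(\hat\pi)=\prod_{s=1}^t dg_s/d\hat\pi_s(O)$. $\hat Q_t$ are $(0,1)$-valued functions of $pa(Y_t)$; $\operatorname{logit}\hat Q_{t,\varepsilon}=\operatorname{logit}\hat Q_t+\varepsilon$ with a single $\varepsilon\in\mathbb{R}$; $\hat V_{t,\varepsilon}=\mathbb{E}_{A_t\sim g_t}[\hat Q_{t,\varepsilon}]$ for $t\le T$ and $\hat V_{T+1,\varepsilon}=Y_T$; $\mathcal{L}_{\mathrm{bce}}(\hat y,y)=-[y\log\hat y+(1-y)\log(1-\hat y)]$. $Pf=\int f\,dP$. *)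

(* Defs.v *)
From HB Require Import structures.
From mathcomp Require Import all_boot all_order all_algebra.
From mathcomp Require Import all_classical all_reals all_analysis.
Set Implicit Arguments. Unset Strict Implicit. Unset Printing Implicit Defensive.
Import Order.TTheory GRing.Theory Num.Theory.
Local Open Scope ring_scope.

Section TMLE.
Variable R : realType.

Definition logit (x : R) : R := ln (x / (1 - x)).
Definition sigmoid (x : R) : R := (1 + expR (- x))^-1.

Definition bce (yhat y : R) : R := - (y * ln yhat + (1 - y) * ln (1 - yhat)).

Definition Pn (Obs : Type) (n : nat) (O : 'I_n -> Obs) (f : Obs -> R) : R :=
  n%:R^-1 * \sum_(i < n) f (O i).

Variables (d : measure_display) (A : measurableType d) (H Obs : Type).
(* H : type of the parent sets pa(A_t); A : treatment space *)
Variables (hist : nat -> Obs -> H) (act : nat -> Obs -> A).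
Variables (T : Obs -> nat) (Y : Obs -> R).
Variables (Qhat : nat -> H -> A -> R).
Variable (g : nat -> H -> probability A R).
Variable (ratio : nat -> H -> A -> R).            (* dg_t / dpihat_t *)

Definition Qeps (t : nat) (eps : R) (h : H) (a : A) : R :=
  sigmoid (logit (Qhat t h a) + eps).

Definition Veps (t : nat) (eps : R) (o : Obs) : R :=
  if (t <= T o)%N then
    Rintegral (g t (hist t o)) setT (fun a => Qeps t eps (hist t o) a)
  else Y o.

Definition Iw (t : nat) (o : Obs) : R :=
  \prod_(1 <= s < t.+1) ratio s (hist s o) (act s o).

Definition Lstar (eps eps' : R) (o : Obs) : R :=
  \sum_(1 <= t < (T o).+1)
     Iw t o * bce (Qeps t eps (hist t o) (act t o)) (Veps t.+1 eps' o).

Definition Dstar (eps psi : R) (o : Obs) : R :=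
  (Veps 1 eps o - psi)
  + \sum_(1 <= t < (T o).+1)
      Iw t o * (Veps t.+1 eps o - Qeps t eps (hist t o) (act t o)).

End TMLE.

(* Main.v *)
Require Import Defs.
From HB Require Import structures.
From mathcomp Require Import all_boot all_order all_algebra.
From mathcomp Require Import all_classical all_reals all_analysis.
From mathcomp Require Import ring lra.
Import Order.TTheory GRing.Theory Num.Theory.
Local Open Scope ring_scope.
Local Open Scope classical_set_scope.
Set Implicit Arguments. Unset Strict Implicit.

Lemma bce_sig (R : realType) (z y : R) :
  bce (sigmoid z) y = ln (1 + expR (- z)) + (1 - y) * z.
Proof.
rewrite /bce /sigmoid.
have e0 : 0 < expR (- z) := expR_gt0 _.
have p0 : 0 < 1 + expR (- z) by rewrite addr_gt0.
have -> : 1 - (1 + expR (- z))^-1 = expR (- z) * (1 + expR (- z))^-1.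
  by field; rewrite gt_eqF.
rewrite lnM ?posrE ?invr_gt0 // lnV ?posrE // expRK.
ring.
Qed.

Section H.
Variable R : realType.
Implicit Types f g : R -> R.
Lemma dD f g (x df dg : R) : is_derive x 1 f df -> is_derive x 1 g dg ->
  is_derive x 1 (fun t => f t + g t) (df + dg).
Proof. move=> a b; exact: is_deriveD. Qed.
Lemma dZ f (k x df : R) : is_derive x 1 f df ->
  is_derive x 1 (fun t => k * f t) (k * df).
Proof. move=> a; exact: is_deriveZ. Qed.
Lemma dC (k x : R) : is_derive x 1 (fun _ => k) 0.
Proof. exact: is_derive_cst. Qed.
Lemma dI (x : R) : is_derive x 1 (fun t : R => t) 1.
Proof. exact: is_derive_id. Qed.
Lemma dcomp f g (x a b : R) : is_derive (g x) 1 f a -> is_derive x 1 g b ->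
  is_derive x 1 (fun t => f (g t)) (a * b).
Proof. move=> u w; exact: is_derive1_comp. Qed.
End H.

Lemma is_derive_bce (R : realType) (x y e : R) :
  is_derive e 1 (fun eps => bce (sigmoid (x + eps)) y) (sigmoid (x + e) - y).
Proof.
have -> : (fun eps => bce (sigmoid (x + eps)) y) =
   (fun eps => ln (1 + expR (- (x + eps))) + (1 - y) * (x + eps)).
  by apply: funext => eps; rewrite bce_sig.
set E := expR (- (x + e)).
have e0 : 0 < E := expR_gt0 _.
have p0 : 0 < 1 + E by rewrite addr_gt0.
have hl : is_derive e 1 (fun t : R => x + t) (0 + 1) := dD (dC x e) (dI e).
have hn : is_derive e 1 (fun t : R => - (x + t)) (-1 * (0 + 1)).
  have := dZ (-1) hl.
  have -> : (fun t => -1 * (x + t)) = (fun t : R => - (x + t)).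
    by apply: funext => t; rewrite mulN1r.
  done.
have hex : is_derive e 1 (fun t : R => expR (- (x + t))) (E * (-1 * (0 + 1))).
  exact: (dcomp (is_derive_expR _) hn).
have h1 : is_derive e 1 (fun t : R => 1 + expR (- (x + t))) (0 + E * (-1 * (0 + 1))).
  exact: dD (dC _ _) hex.
have hln : is_derive e 1 (fun t : R => ln (1 + expR (- (x + t)))) ((1 + E)^-1 * (0 + E * (-1 * (0 + 1)))).
  have hh := is_derive1_ln p0.
  exact: (@dcomp _ (@ln R) (fun t : R => 1 + expR (- (x + t))) e _ _ hh h1).
have hz : is_derive e 1 (fun t : R => (1 - y) * (x + t)) ((1 - y) * (0 + 1)) := dZ _ hl.
apply: is_derive_eq (dD hln hz) _.
rewrite /sigmoid -/E.
field; rewrite gt_eqF //.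

Qed.

Lemma dsum (R : realType) (I : Type) (r : seq I) (P : pred I) (h : I -> R -> R)
  (dh : I -> R) (x : R) : (forall i, is_derive x 1 (h i) (dh i)) ->
  is_derive x 1 (fun t => \sum_(i <- r | P i) h i t) (\sum_(i <- r | P i) dh i).
Proof.
move=> hd; elim: r => [|a r IH].
  have -> : (fun t => \sum_(i <- [::] | P i) h i t) = (fun _ => 0).
    by apply: funext => t; rewrite big_nil.
  by rewrite big_nil; exact: dC.
have -> : (fun t => \sum_(i <- a :: r | P i) h i t) =
  (fun t => if P a then h a t + \sum_(i <- r | P i) h i t else \sum_(i <- r | P i) h i t).
  by apply: funext => t; rewrite big_cons.
rewrite big_cons; case: (P a) => //.
exact: dD.
Qed.

Theorem corollary4p3 (R : realType) (d : measure_display) (A : measurableType d)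
  (H Obs : Type) (tau : nat)
  (hist : nat -> Obs -> H) (act : nat -> Obs -> A)
  (T : Obs -> nat) (Y : Obs -> R)
  (Qhat : nat -> H -> A -> R)
  (g pihat : nat -> H -> probability A R)
  (ratio : nat -> H -> A -> R)
  (n : nat) (O : 'I_n -> Obs) (estar : R) :
  (0 < n)%N ->
  (forall o, (T o <= tau)%N) ->
  (forall o, 0 <= Y o <= 1) ->
  (forall t h a, 0 < Qhat t h a < 1) ->
  (forall t h, measurable_fun setT (Qhat t h)) ->
  (* g_t << pihat_t with Radon-Nikodym derivative ratio t h = dg_t/dpihat_t *)
  (forall t h, measurable_fun setT (ratio t h)) ->
  (forall t h a, 0 <= ratio t h a) ->
  (forall t h (B : set A), measurable B ->
      g t h B = (\int[pihat t h]_(a in B) (ratio t h a)%:E)%E) ->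
  is_derive estar 1
    (fun eps => Pn O (Lstar hist act T Y Qhat g ratio eps estar)) 0 ->
  Pn O (Dstar hist act T Y Qhat g ratio estar
          (Pn O (Veps hist T Y Qhat g 1 estar))) = 0.
Proof.
move=> n0 _ _ _ _ _ _ _ hD.
set dL := fun o => \sum_(1 <= t < (T o).+1) Iw hist act ratio t o *
   (Qeps Qhat t estar (hist t o) (act t o) - Veps hist T Y Qhat g t.+1 estar o).
have hD2 : is_derive estar 1
    (fun eps => Pn O (Lstar hist act T Y Qhat g ratio eps estar))
    (n%:R^-1 * \sum_(i < n) dL (O i)).
  rewrite /Pn; apply: dZ; apply: dsum => i; rewrite /Lstar /dL.
  apply: dsum => t; apply: dZ; exact: is_derive_bce.
have hz : n%:R^-1 * \sum_(i < n) dL (O i) = 0.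
  by rewrite -(@derive_val _ _ _ _ _ _ _ hD2) (@derive_val _ _ _ _ _ _ _ hD).
have nz : (n%:R : R) != 0 by rewrite pnatr_eq0 -lt0n.
have hs : \sum_(i < n) dL (O i) = 0.
  by move: hz => /eqP; rewrite mulf_eq0 invr_eq0 (negbTE nz) /= => /eqP.
rewrite /Pn /Dstar big_split /= sumrB sumr_const card_ord.
have -> : \sum_(i < n) \sum_(1 <= t < (T (O i)).+1) Iw hist act ratio t (O i) *
     (Veps hist T Y Qhat g t.+1 estar (O i) - Qeps Qhat t estar (hist t (O i)) (act t (O i)))
   = - \sum_(i < n) dL (O i).
  rewrite -sumrN; apply: eq_bigr => i _; rewrite /dL -sumrN; apply: eq_bigr => t _.
  by rewrite -mulrN opprB.
rewrite hs oppr0 addr0.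
set S := \sum_(i < n) _.
by field.
Qed.
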